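(* Let $\mathcal{P}_1,\mathcal{P}_2\subseteq\mathbb{R}^n$ be non-empty topologically closed convex polyhedra, where $\mathcal{P}_1=\mathrm{con}(\mathcal{C}_1)=\mathrm{gen}(\mathcal{G}_1)$ for a finite constraint system $\mathcal{C}_1$ and a generator system $\mathcal{G}_1=(R_1,P_1)$. Then $\mathcal{P}_1\uplus\mathcal{P}_2\neq\mathcal{P}_1\cup\mathcal{P}_2$ if and only if there exist a constraint $\beta_1\in\mathcal{C}_1$ and a generator $g_1$ of $\mathcal{G}_1$ (i.e., a ray in $R_1$ or a point in $P_1$) such that (1) $g_1$ saturates $\beta_1$, (2) $\mathcal{P}_2$ violates $\beta_1$, and (3) $\mathcal{P}_2$ does not subsume $g_1$.
   Context: A constraint is a non-strict linear inequality $\langle\mathbf{a},\mathbf{x}\rangle\le b$ with $\mathbf{a}\in\mathbb{R}^n\setminus\{\mathbf{0}\}$, $b\in\mathbb{R}$ (equalities are treated as pairs of inequalities). For a finite set $\mathcal{C}$ of constraints, $\mathrm{con}(\mathcal{C})=\{\mathbf{p}\in\mathbb{R}^n : \langle\mathbf{a},\mathbf{p}\rangle\le b \text{ for all } (\langle\mathbf{a},\mathbf{x}\rangle\le b)\in\mathcal{C}\}$; such sets are the (topologically closed convex) polyhedra. A generator system is a pair $(R,P)$ of finite sets $R=\{\mathbf{r}_1,\dots,\mathbf{r}_r\}$, $P=\{\mathbf{p}_1,\dots,\mathbf{p}_p\}\subseteq\mathbb{R}^n$ with $\mathbf{0}\notin R$, and $\mathrm{gen}((R,P))=\{\sum_i\rho_i\mathbf{r}_i+\sum_i\sigma_i\mathbf{p}_i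 : \rho_i\ge 0,\ \sigma_i\ge0,\ \sum_i\sigma_i=1\}$; elements of $R$ are called rays and elements of $P$ points of the generator system. A vector $\mathbf{r}\neq\mathbf{0}$ is a ray of a non-empty polyhedron $\mathcal{P}$ if $\mathbf{p}+\rho\mathbf{r}\in\mathcal{P}$ for all $\mathbf{p}\in\mathcal{P}$, $\rho\ge0$. A point $\mathbf{p}$ saturates the constraint $\langle\mathbf{a},\mathbf{x}\rangle\le b$ if $\langle\mathbf{a},\mathbf{p}\rangle=b$; a ray $\mathbf{r}$ saturates it if $\langle\mathbf{a},\mathbf{r}\rangle=0$. A polyhedron violates a constraint if some point of it does not satisfy the constraint. A polyhedron $\mathcal{P}$ subsumes a point $\mathbf{p}$ if $\mathbf{p}\in\mathcal{P}$, and subsumes a ray $\mathbf{r}$ if $\mathbf{r}$ is a ray of $\mathcal{P}$. $\mathcal{P}_1\uplus\mathcal{P}_2$ denotes the convex polyhedral hull, i.e., the smallest closed convex polyhedron containing $\mathcal{P}_1\cup\mathcal{P}_2$; if $\mathcal{P}_i=\mathrm{gen}((R_i,P_i))$ then $\mathcal{P}_1\uplus\mathcal{P}_2=\mathrm{gen}((R_1\cup R_2,P_1\cup P_2))$. *)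

(* Defs.v *)
From HB Require Import structures.
From mathcomp Require Import all_boot all_order all_algebra.
From mathcomp Require Import boolp classical_sets reals.
Set Implicit Arguments. Unset Strict Implicit. Unset Printing Implicit Defensive.
Import Order.TTheory GRing.Theory Num.Theory.
Local Open Scope ring_scope.
Local Open Scope classical_set_scope.

Section Polyhedra.
Variables (R : realType) (n : nat).

Definition dotp (a x : 'rV[R]_n) : R := \sum_(i < n) a 0 i * x 0 i.

(* a constraint <a, x> <= b, represented by the pair (a, b); a must be nonzero *)
Definition constraint := ('rV[R]_n * R)%type.
Definition valid_constraint (c : constraint) : Prop := c.1 != 0.
Definition valid_system (C : seq constraint) : Prop :=
  forall c, c \in C -> valid_constraint c.

Definition sat (c : constraint) (p : 'rV[R]_n) : Prop := dotp c.1 p <= c.2.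

Definition con (C : seq constraint) : set 'rV[R]_n :=
  [set p | forall c, c \in C -> sat c p].

Definition is_polyhedron (S : set 'rV[R]_n) : Prop :=
  exists C : seq constraint, valid_system C /\ S = con C.

Definition gen (Rs Ps : seq 'rV[R]_n) : set 'rV[R]_n :=
  [set x | exists (rho : 'I_(size Rs) -> R) (sigma : 'I_(size Ps) -> R),
     (forall i, 0 <= rho i) /\ (forall i, 0 <= sigma i) /\
     \sum_(i < size Ps) sigma i = 1 /\
     x = \sum_(i < size Rs) rho i *: Rs`_i + \sum_(i < size Ps) sigma i *: Ps`_i].

Definition valid_gen_system (Rs Ps : seq 'rV[R]_n) : Prop := 0 \notin Rs.

Definition is_ray (S : set 'rV[R]_n) (r : 'rV[R]_n) : Prop :=
  r != 0 /\ forall p rho, S p -> 0 <= rho -> S (p + rho *: r).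

Definition point_saturates (p : 'rV[R]_n) (c : constraint) : Prop := dotp c.1 p = c.2.
Definition ray_saturates (r : 'rV[R]_n) (c : constraint) : Prop := dotp c.1 r = 0.

Definition violates (S : set 'rV[R]_n) (c : constraint) : Prop :=
  exists p, S p /\ ~ sat c p.

Definition subsumes_point (S : set 'rV[R]_n) (p : 'rV[R]_n) : Prop := S p.
Definition subsumes_ray (S : set 'rV[R]_n) (r : 'rV[R]_n) : Prop := is_ray S r.

(* convex polyhedral hull: the intersection of all polyhedra containing
   S1 `|` S2, i.e. the smallest closed convex polyhedron containing the union *)
Definition poly_hull (S1 S2 : set 'rV[R]_n) : set 'rV[R]_n :=
  [set x | forall C : seq constraint, valid_system C ->
     S1 `|` S2 `<=` con C -> con C x].

End Polyhedra.

(* Main.v *)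
Require Import Defs.
From HB Require Import structures.
From mathcomp Require Import all_boot all_order all_algebra ring lra.
From mathcomp Require Import boolp classical_sets reals.
Import Order.TTheory GRing.Theory Num.Theory.
Local Open Scope ring_scope.
Local Open Scope classical_set_scope.

Section Aux.
Variables (R : realType) (n : nat).
Implicit Types (a x y : 'rV[R]_n).

Lemma dotpD a x y : dotp a (x + y) = dotp a x + dotp a y.
Proof. by rewrite /dotp -big_split; apply: eq_bigr => i _; rewrite mxE mulrDr. Qed.

Lemma dotpZ a (k : R) x : dotp a (k *: x) = k * dotp a x.
Proof. by rewrite /dotp mulr_sumr; apply: eq_bigr => i _; rewrite mxE mulrCA. Qed.

Lemma dotp0 a : dotp a 0 = 0.
Proof. by rewrite /dotp big1 // => i _; rewrite mxE mulr0. Qed.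

Lemma dotp_sum a (I : Type) (r : seq I) (P : pred I) (F : I -> 'rV[R]_n) :
  dotp a (\sum_(i <- r | P i) F i) = \sum_(i <- r | P i) dotp a (F i).
Proof. exact: (big_morph _ (dotpD a) (dotp0 a)). Qed.

Lemma ray_le0 (u v b : R) : (forall l, 0 <= l -> u + l * v <= b) -> v <= 0.
Proof.
move=> H; rewrite leNgt; apply/negP => v0.
have hu := H 0 (lexx 0); rewrite mul0r addr0 in hu.
have l0 : 0 <= (b - u + 1) / v by rewrite divr_ge0 ?ltW //; lra.
have := H _ l0; rewrite divfK ?gt_eqF //; lra.
Qed.

Lemma gen_ray (R1 P1 : seq 'rV[R]_n) r p l :
  r \in R1 -> gen R1 P1 p -> 0 <= l -> gen R1 P1 (p + l *: r).
Proof.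
move=> rR [rho [sigma [h1 [h2 [h3 ->]]]]] l0.
have kP : (index r R1 < size R1)%N by rewrite index_mem.
pose k := Ordinal kP.
exists (fun i => rho i + (i == k)%:R * l), sigma; split.
  by move=> i; apply: addr_ge0 => //; apply: mulr_ge0.
split=> //; split=> //.
rewrite [in RHS](eq_bigr (fun i => rho i *: R1`_i + ((i == k)%:R * l) *: R1`_i));
  last by move=> i _; rewrite scalerDl.
rewrite big_split /=.
have -> : \sum_(i < size R1) ((i == k)%:R * l) *: R1`_i = l *: r.
  rewrite (bigD1 k) //= eqxx mul1r big1 ?addr0 ?nth_index //.
  by move=> i /negbTE ->; rewrite mul0r scale0r.
by rewrite addrAC.
Qed.

Lemma gen_point (R1 P1 : seq 'rV[R]_n) p : p \in P1 -> gen R1 P1 p.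
Proof.
move=> pP.
have kP : (index p P1 < size P1)%N by rewrite index_mem.
pose k := Ordinal kP.
exists (fun => 0), (fun i => (i == k)%:R); split=> //; split.
  by move=> i; rewrite ler0n.
split.
  by rewrite (bigD1 k) //= eqxx big1 ?addr0 // => i /negbTE ->.
rewrite big1 ?add0r; last by move=> i _; rewrite scale0r.
rewrite (bigD1 k) //= eqxx scale1r big1 ?addr0 ?nth_index //.
by move=> i /negbTE ->; rewrite scale0r.
Qed.


Lemma dir_le0 (S : set 'rV[R]_n) (c : constraint R n) r :
  (exists s, S s) -> (forall s l, S s -> 0 <= l -> S (s + l *: r)) ->
  (forall s, S s -> sat c s) -> dotp c.1 r <= 0.
Proof.
case=> s Ss H Hc; apply: (@ray_le0 (dotp c.1 s) _ c.2) => l l0.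
by have := Hc _ (H _ _ Ss l0); rewrite /sat dotpD dotpZ.
Qed.

Lemma sat_conv (c : constraint R n) x y (t : R) : 0 <= t -> t <= 1 ->
  sat c x -> sat c y -> sat c ((1 - t) *: x + t *: y).
Proof.
rewrite /sat dotpD !dotpZ => t0 t1 hx hy.
have h1 : (1 - t) * dotp c.1 x <= (1 - t) * c.2 by rewrite ler_wpM2l // subr_ge0.
have h2 : t * dotp c.1 y <= t * c.2 by rewrite ler_wpM2l.
lra.
Qed.

Lemma hull_sub (S1 S2 : set 'rV[R]_n) : S1 `|` S2 `<=` poly_hull S1 S2.
Proof. by move=> x Sx C _ sub; apply: sub. Qed.

Lemma hull_conv (S1 S2 : set 'rV[R]_n) x y (t : R) : 0 <= t -> t <= 1 ->
  poly_hull S1 S2 x -> poly_hull S1 S2 y -> poly_hull S1 S2 ((1 - t) *: x + t *: y).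
Proof.
move=> t0 t1 hx hy C vC sub c cC.
by apply: sat_conv => //; [apply: (hx C vC sub c cC) | apply: (hy C vC sub c cC)].
Qed.

Lemma hull_ray (S1 S2 : set 'rV[R]_n) r x l :
  (exists s, S1 s) -> (forall s l, S1 s -> 0 <= l -> S1 (s + l *: r)) ->
  poly_hull S1 S2 x -> 0 <= l -> poly_hull S1 S2 (x + l *: r).
Proof.
move=> ne H hx l0 C vC sub c cC.
have hr : dotp c.1 r <= 0.
  apply: (@dir_le0 S1 c r ne H) => s Ss; apply: (sub s) => //; by left.
have := hx C vC sub c cC; rewrite /sat dotpD dotpZ.
have : l * dotp c.1 r <= 0 by rewrite mulr_ge0_le0.
lra.
Qed.

Lemma face (C1 C2 : seq (constraint R n)) (R1 P1 : seq 'rV[R]_n)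
  (S1 S2 : set 'rV[R]_n) (bt : constraint R n) :
  S1 = con C1 -> S1 = gen R1 P1 -> (exists s, S1 s) ->
  S2 = con C2 -> (exists s, S2 s) -> bt \in C1 ->
  (forall r, r \in R1 -> ray_saturates r bt -> is_ray S2 r) ->
  (forall p, p \in P1 -> point_saturates p bt -> S2 p) ->
  forall w, S1 w -> point_saturates w bt -> S2 w.
Proof.
move=> E1 G1 ne1 E2 ne2 btC HR HP w S1w.
have hray : forall i : 'I_(size R1), dotp bt.1 R1`_i <= 0.
  move=> i; apply: (@dir_le0 S1 bt R1`_i ne1).
    by move=> s l Ss l0; rewrite G1; apply: gen_ray; rewrite -?G1 // mem_nth.
  by move=> s; rewrite E1 => /(_ bt btC).
have hpt : forall j : 'I_(size P1), dotp bt.1 P1`_j <= bt.2.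
  move=> j; have : S1 P1`_j by rewrite G1; apply: gen_point; rewrite mem_nth.
  by rewrite E1 => /(_ bt btC).
move: S1w; rewrite {1}G1 => -[rho [sigma [h1 [h2 [h3 ->]]]]].
rewrite /point_saturates dotpD !dotp_sum => sat0.
have e1 : \sum_(i < size R1) dotp bt.1 (rho i *: R1`_i) =
  \sum_(i < size R1) rho i * dotp bt.1 R1`_i by apply: eq_bigr => i _; rewrite dotpZ.
have e2 : \sum_(i < size P1) dotp bt.1 (sigma i *: P1`_i) =
  \sum_(i < size P1) sigma i * dotp bt.1 P1`_i by apply: eq_bigr => i _; rewrite dotpZ.
rewrite e1 e2 in sat0.
set A := \sum_(i < size R1) - (rho i * dotp bt.1 R1`_i).
set B := \sum_(j < size P1) sigma j * (bt.2 - dotp bt.1 P1`_j).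
have A0 : 0 <= A.
  by apply: sumr_ge0 => i _; rewrite oppr_ge0 mulr_ge0_le0.
have B0 : 0 <= B.
  by apply: sumr_ge0 => j _; rewrite mulr_ge0 // subr_ge0.
have AB : A + B = 0.
  rewrite /A /B sumrN.
  rewrite (eq_bigr (fun j => sigma j * bt.2 - sigma j * dotp bt.1 P1`_j));
    last by move=> j _; rewrite mulrBr.
  rewrite sumrB -mulr_suml h3 mul1r.
  lra.
have Ae : A = 0 by lra.
have Be : B = 0 by lra.
have tA : forall i, rho i * dotp bt.1 R1`_i = 0.
  move=> i; apply/eqP; rewrite -oppr_eq0; apply/eqP.
  by apply: (psumr_eq0P _ Ae) => // j _; rewrite oppr_ge0 mulr_ge0_le0.
have tB : forall j, sigma j * (bt.2 - dotp bt.1 P1`_j) = 0.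
  by move=> j; apply: (psumr_eq0P _ Be) => // k _; rewrite mulr_ge0 // subr_ge0.
rewrite E2 => c cC; rewrite /sat dotpD !dotp_sum.
have s1 : \sum_(i < size R1) dotp c.1 (rho i *: R1`_i) <= 0.
  apply: le_trans (ler_sum _ (G:=fun=>0) _) _; last by rewrite big1_eq.
  move=> i _; rewrite dotpZ.
  case: (eqVneq (rho i) 0) => [->|rne]; first by rewrite mul0r.
  apply: mulr_ge0_le0 => //.
  have /eqP := tA i; rewrite mulf_eq0 (negbTE rne) /= => /eqP sat1.
  have [_ Hr] := HR _ (mem_nth 0 (ltn_ord i)) sat1.
  apply: (@dir_le0 S2 c R1`_i ne2 Hr).
  by move=> s; rewrite E2 => /(_ c cC).
have s2 : \sum_(i < size P1) dotp c.1 (sigma i *: P1`_i) <= c.2.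
  apply: le_trans (ler_sum _ (G:=fun i => sigma i * c.2) _) _; last first.
    by rewrite -mulr_suml h3 mul1r.
  move=> i _; rewrite dotpZ.
  case: (eqVneq (sigma i) 0) => [->|sne]; first by rewrite !mul0r.
  apply: ler_wpM2l => //.
  have /eqP := tB i; rewrite mulf_eq0 (negbTE sne) /= subr_eq0 => /eqP sat1.
  have := HP _ (mem_nth 0 (ltn_ord i)) (esym sat1).
  by rewrite E2 => /(_ c cC).
lra.
Qed.

Lemma exists_min (T : eqType) (s : seq T) (P : T -> Prop) (f : T -> R) :
  (exists z : T, z \in s /\ P z) ->
  exists x0 : T, [/\ x0 \in s, P x0 & forall y : T, y \in s -> P y -> f x0 <= f y].
Proof.
elim: s => [|a s IH]; first by case=> x [].
move=> [x1 [xin Px]].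
case: (EM (exists z : T, z \in s /\ P z)) => [/IH [x0 [x0s P0 m]] | nos].
  case: (EM (P a)) => [Pa|nPa].
    case: (leP (f a) (f x0)) => [le|lt].
      exists a; split=> //; first by rewrite in_cons eqxx.
      move=> y; rewrite in_cons => /orP [/eqP ->|ys] Py //.
      exact: le_trans le (m _ ys Py).
    exists x0; split=> //; first by rewrite in_cons x0s orbT.
    move=> y; rewrite in_cons => /orP [/eqP ->|ys] Py; last exact: m.
    exact: ltW.
  exists x0; split=> //; first by rewrite in_cons x0s orbT.
  by move=> y; rewrite in_cons => /orP [/eqP ->|ys] Py; [|exact: m].
have xa : x1 = a.
  move: xin; rewrite in_cons => /orP [/eqP //|xs]; exfalso; apply: nos; by exists x1.
exists a; split; first by rewrite in_cons eqxx.
  by rewrite -xa.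
move=> y; rewrite in_cons => /orP [/eqP ->|ys] Py //.
exfalso; apply: nos; by exists y.
Qed.

Lemma ar_t (u v b : R) : u <= b -> b < v ->
  [/\ 0 <= (b - u) / (v - u), (b - u) / (v - u) < 1 &
     (b - u) / (v - u) * (v - u) = b - u].
Proof.
move=> ub bv; have vu : 0 < v - u by lra.
split.
- by apply: divr_ge0; [rewrite subr_ge0 | apply: ltW].
- by rewrite ltr_pdivrMr // mul1r; lra.
- by rewrite divfK // gt_eqF.
Qed.

End Aux.
Arguments ar_t {R u v b}.
Arguments face {R n C1 C2 R1 P1 S1 S2 bt}.
Arguments hull_ray {R n S1 S2 r x l}.
Arguments hull_conv {R n S1 S2 x y t}.

Theorem theorem3 (R : realType) (n : nat)
  (S1 S2 : set 'rV[R]_n) (C1 : seq (constraint R n)) (R1 P1 : seq 'rV[R]_n) :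
  valid_system C1 -> valid_gen_system R1 P1 ->
  S1 = con C1 -> S1 = gen R1 P1 ->
  is_polyhedron S2 ->
  S1 !=set0 -> S2 !=set0 ->
  (poly_hull S1 S2 <> S1 `|` S2 <->
   exists beta1, beta1 \in C1 /\
     ((exists r, r \in R1 /\ ray_saturates r beta1 /\ violates S2 beta1 /\
                 ~ subsumes_ray S2 r) \/
      (exists p, p \in P1 /\ point_saturates p beta1 /\ violates S2 beta1 /\
                 ~ subsumes_point S2 p))).
Proof.
move=> vC1 vG E1 G1 [C2 [vC2 E2]] ne1 ne2.
have ne1' : exists s, S1 s by case: ne1 => s; exists s.
have ne2' : exists s, S2 s by case: ne2 => s; exists s.
have S1ray : forall r, r \in R1 -> forall s l, S1 s -> 0 <= l -> S1 (s + l *: r).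
  by move=> r rR s l; rewrite G1 => Ss l0; apply: gen_ray.
split.
- move=> Hne; apply: contrapT => Hno; apply: Hne.
  apply/seteqP; split; last exact: hull_sub.
  move=> x hx.
  pose C' := [seq c <- C1 | `[< ~ violates S2 c >]] ++
             [seq c <- C2 | `[< ~ violates S1 c >]].
  have vC' : valid_system C'.
    move=> c; rewrite mem_cat !mem_filter => /orP [/andP [_ ?]|/andP [_ ?]].
      exact: vC1.
    exact: vC2.
  have sub : S1 `|` S2 `<=` con C'.
    move=> y Sy c; rewrite mem_cat !mem_filter.
    case/orP => [/andP [/asboolP nv cC] | /andP [/asboolP nv cC]].
      case: Sy => Sy; first by rewrite E1 in Sy; apply: Sy.
      by apply: contrapT => nsat; apply: nv; exists y.
    case: Sy => Sy; last by rewrite E2 in Sy; apply: Sy.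
    by apply: contrapT => nsat; apply: nv; exists y.
  have hx' := hx C' vC' sub.
  case: (EM (S1 x)) => [|nS1]; [by left|right].
  apply: contrapT => nS2.
  have [g [gC ng]] : exists g, g \in C2 /\ ~ sat g x.
    apply: contrapT => H; apply: nS2; rewrite E2 => g gC.
    by apply: contrapT => ng; apply: H; exists g.
  have [s [S1s ngs]] : violates S1 g.
    apply: contrapT => nv; apply: ng; apply: hx'.
    by rewrite mem_cat; apply/orP; right; rewrite mem_filter gC andbT; apply/asboolP.
  have ex1 : exists b, b \in C1 /\ ~ sat b x.
    apply: contrapT => H; apply: nS1; rewrite E1 => b bC.
    by apply: contrapT => nb; apply: H; exists b.
  have [b0 [b0C nb0 bmin]] := @exists_min R _ _ _
    (fun b : constraint R n => (b.2 - dotp b.1 s) / (dotp b.1 x - dotp b.1 s)) ex1.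
  have sS : forall c, c \in C1 -> sat c s by rewrite E1 in S1s.
  have u0b : dotp b0.1 s <= b0.2 by apply: sS.
  have b0v : b0.2 < dotp b0.1 x by rewrite ltNge; apply/negP.
  have [t0 t1 te] := ar_t u0b b0v.
  move: t0 t1 te bmin.
  set t := (b0.2 - dotp b0.1 s) / (dotp b0.1 x - dotp b0.1 s).
  clearbody t => t0 t1 te bmin.
  pose w := (1 - t) *: s + t *: x.
  have vb0 : violates S2 b0.
    apply: contrapT => nv; apply: nb0; apply: hx'.
    by rewrite mem_cat mem_filter b0C andbT; apply/orP; left; apply/asboolP.
  have S1w : S1 w.
    rewrite E1 => c cC.
    case: (EM (sat c x)) => [sx|nsx]; first by apply: sat_conv => //; [exact: ltW | exact: sS].
    have := bmin c cC nsx.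
    have ucb : dotp c.1 s <= c.2 by apply: sS.
    have cv : c.2 < dotp c.1 x by rewrite ltNge; apply/negP.
    have [_ _ tce] := ar_t ucb cv.
    move: tce; set tc := (_ / _) => tce tle.
    have vu : 0 <= dotp c.1 x - dotp c.1 s by lra.
    have := ler_wpM2r vu tle.
    rewrite /sat /w dotpD !dotpZ.
    lra.
  have satw : point_saturates w b0.
    rewrite /point_saturates /w dotpD !dotpZ; lra.
  have S2w : S2 w.
    apply: (face E1 G1 ne1' E2 ne2' b0C) => //.
      move=> r rR rs; apply: contrapT => nr; apply: Hno; exists b0; split=> //.
      by left; exists r.
    move=> p pP ps; apply: contrapT => np; apply: Hno; exists b0; split=> //.
    by right; exists p.
  have := S2w; rewrite E2 => /(_ g gC).
  have gx : g.2 < dotp g.1 x by rewrite ltNge; apply/negP.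
  have gs : g.2 < dotp g.1 s by rewrite ltNge; apply/negP.
  rewrite /sat /w dotpD !dotpZ.
  have : 0 < (1 - t) * (dotp g.1 s - g.2) by apply: mulr_gt0; lra.
  have : 0 <= t * (dotp g.1 x - g.2) by apply: mulr_ge0 => //; lra.
  lra.
- move=> [b [bC [[r [rR [rs [[q [S2q nq]] nr]]]] | [p [pP [ps [[q [S2q nq]] np]]]]]]] E.
  + have [c [cC cpos]] : exists c, c \in C2 /\ 0 < dotp c.1 r.
      apply: contrapT => H; apply: nr; split.
        apply/eqP => r0; move: vG; rewrite /valid_gen_system -r0 rR //.
      rewrite E2 => p0 l Sp l0 c cC.
      have : dotp c.1 r <= 0.
        by rewrite leNgt; apply/negP => pos; apply: H; exists c.
      move=> cr; have := Sp c cC; rewrite /sat dotpD dotpZ.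
      have : l * dotp c.1 r <= 0 by rewrite mulr_ge0_le0.
      lra.
    have qc : dotp c.1 q <= c.2 by move: S2q; rewrite E2 => /(_ c cC).
    pose l := (c.2 - dotp c.1 q + 1) / dotp c.1 r.
    have l0 : 0 <= l by rewrite divr_ge0 ?ltW //; lra.
    have hz : poly_hull S1 S2 (q + l *: r).
      by apply: hull_ray => //; [apply: S1ray | apply: hull_sub; right].
    move: hz; rewrite E; case.
      rewrite E1 => /(_ b bC); rewrite /sat dotpD dotpZ rs mulr0 addr0.
      by move=> h; apply: nq.
    rewrite E2 => /(_ c cC); rewrite /sat dotpD dotpZ /l divfK ?gt_eqF //.
    lra.
  + have [c [cC ncp]] : exists c, c \in C2 /\ ~ sat c p.
      apply: contrapT => H; apply: np; rewrite /subsumes_point E2 => c cC.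
      by apply: contrapT => nc; apply: H; exists c.
    have cp : c.2 < dotp c.1 p by rewrite ltNge; apply/negP.
    have qc : dotp c.1 q <= c.2 by move: S2q; rewrite E2 => /(_ c cC).
    have bq : b.2 < dotp b.1 q by rewrite ltNge; apply/negP.
    pose e := dotp c.1 p - c.2.
    pose f := c.2 - dotp c.1 q.
    have ef : 0 < 2 * (e + f) by rewrite /e /f; lra.
    pose t := e / (2 * (e + f)).
    have t0 : 0 < t by rewrite divr_gt0 // /e; lra.
    have te : t * (2 * (e + f)) = e by rewrite divfK ?gt_eqF.
    have t1 : t <= 1.
      rewrite ler_pdivrMr // mul1r /e /f; lra.
    move: t0 te t1; rewrite /e /f; clearbody t => t0 te t1.
    have hz : poly_hull S1 S2 ((1 - t) *: p + t *: q).
      apply: hull_conv => //; first exact: ltW.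
        by apply: hull_sub; left; rewrite G1; apply: gen_point.
      by apply: hull_sub; right.
    move: hz; rewrite E; case.
      rewrite E1 => /(_ b bC); rewrite /sat dotpD !dotpZ ps.
      have : 0 < t * (dotp b.1 q - b.2) by apply: mulr_gt0 => //; lra.
      lra.
    rewrite E2 => /(_ c cC); rewrite /sat dotpD !dotpZ.
    lra.
Qed.
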